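(* Let $q$ be a prime power, $e\ge2$ and $k\ge2$ integers, and $n=3^ek$. For $i=1,\dots,e$ put $K_i=3^{i-1}k$, fix a primitive element $\omega_i$ of $\mathbb{F}_{q^{K_i}}$ and $\gamma_i\in\mathbb{F}_{q^{3K_i}}$ with $\mathbb{F}_{q^{K_i}}(\gamma_i)=\mathbb{F}_{q^{3K_i}}$, and for $a\in\mathbb{F}_{q^{K_i}}$, $j\in\{0,\dots,q-2\}$ define $\Phi_{i,a,j}:\mathbb{F}_{q^{K_i}}\to\mathbb{F}_{q^{3K_i}}$, $\Phi_{i,a,j}(u)=u+\omega_i^j(u^q+au)\gamma_i$. Let $\mathcal{D}_1=\bigcup_{a,j}\mathrm{Orb}_{\mathbb{F}_{q^{3k}}^*}(\Phi_{1,a,j}(\mathbb{F}_{q^k}))\subseteq\mathcal{G}_q(3k,k)$ and, for $i=2,\dots,e$, $\mathcal{D}_i=\{\beta\,\Phi_{i,a,j}(U):\beta\in\mathbb{F}_{q^{3K_i}}^*,\ a\in\mathbb{F}_{q^{K_i}},\ 0\le j\le q-2,\ U\in\mathcal{D}_{i-1}\}\subseteq\mathcal{G}_q(3^ik,k)$, and let ${}_{3^e}\mathcal{C}_k=\mathcal{D}_e$ (a cyclic subspace code in $\mathcal{G}_q(n,k)$ with minimum distance $2k-2$). Then $$\lim_{k\to\infty}\frac{|{}_{3^e}\mathcal{C}_k|}{J_q(3^ek,2k-2,k)}=1\quad(q\text{ fixed}),\qquad\lim_{q\to\infty}\frac{|{}_{3^e}\mathcal{C}_k|}{J_q(3^ek,2k-2,k)}=1\quad(k\text{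 fixed}),$$ i.e. the family is asymptotically optimal in $k$ and in $q$.
   Context: $\mathcal{G}_q(N,k)$ is the set of $k$-dimensional $\mathbb{F}_q$-subspaces of $\mathbb{F}_{q^N}$; $\mathrm{Orb}_{\mathbb{F}_{q^N}^*}(V)=\{\beta V:\beta\in\mathbb{F}_{q^N}^*\}$. The Johnson type bound II quantity for minimum distance $2k-2$ is $J_q(n,2k-2,k)=\left\lfloor\frac{q^n-1}{q^k-1}\left\lfloor\frac{q^{n-1}-1}{q^{k-1}-1}\right\rfloor\right\rfloor$, an upper bound on the size of any subspace code in $\mathcal{G}_q(n,k)$ with minimum subspace distance $2k-2$ (subspace distance $d(U,V)=\dim(U+V)-\dim(U\cap V)$). $|\cdot|$ denotes cardinality of a code as a set of subspaces. *)

(* Defs.v *)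
From HB Require Import structures.
From mathcomp Require Import all_boot all_order all_algebra.
Set Implicit Arguments. Unset Strict Implicit. Unset Printing Implicit Defensive.
Import Order.TTheory GRing.Theory Num.Theory.
Local Open Scope ring_scope.

Definition prime_power (q : nat) : Prop :=
  exists p r : nat, prime p /\ (0 < r)%N /\ q = (p ^ r)%N.

(* Johnson type bound II for distance 2k-2:
   floor( (q^n-1)/(q^k-1) * floor((q^(n-1)-1)/(q^(k-1)-1)) ).
   Since the inner floor is an integer m, floor(a/b * m) = (a*m) div b. *)
Definition Jq (q n k : nat) : nat :=
  (((q ^ n - 1) * ((q ^ (n - 1) - 1) %/ (q ^ (k - 1) - 1))) %/ (q ^ k - 1))%N.

Section Construction.
Variable L : finFieldType.

(* The subfield F_{q^m} of L, as the set of roots of X^{q^m} - X. *)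
Definition Fq (q m : nat) : {set L} := [set x : L | x ^+ (q ^ m)%N == x].

Definition primitive_in (q m : nat) (w : L) : Prop :=
  w \in Fq q m /\ (forall x, x \in Fq q m -> x != 0 -> exists t : nat, x = w ^+ t).

Definition is_subfield (F : {set L}) : bool :=
  [&& 0 \in F, 1 \in F,
      [forall x in F, forall y in F, (x - y \in F) && (x * y \in F)]
    & [forall x in F, x^-1 \in F]].

Definition gen_field (S : {set L}) : {set L} :=
  \bigcap_(F : {set L} | is_subfield F && (S \subset F)) F.

Definition Kdim (k i : nat) : nat := (3 ^ (i - 1) * k)%N.

Definition Phi (q : nat) (om gam : nat -> L) (i : nat) (a : L) (j : nat) (u : L) : L :=
  u + om i ^+ j * (u ^+ q + a * u) * gam i.

Definition orb (q N : nat) (V : {set L}) : {set {set L}} :=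
  [set [set b * v | v in V] | b in Fq q N :\ 0].

Definition D1 (q : nat) (om gam : nat -> L) (k : nat) : {set {set L}} :=
  \bigcup_(a in Fq q k) \bigcup_(j < q.-1)
     orb q (3 * k) [set Phi q om gam 1 a j u | u in Fq q k].

Definition Dstep (q : nat) (om gam : nat -> L) (k i : nat) (D : {set {set L}})
  : {set {set L}} :=
  \bigcup_(a in Fq q (Kdim k i)) \bigcup_(j < q.-1) \bigcup_(U in D)
     [set [set b * Phi q om gam i a j u | u in U] | b in Fq q (3 * Kdim k i) :\ 0].

(* D_i for i >= 1 (D_0 is an unused dummy) *)
Fixpoint Dcode (q : nat) (om gam : nat -> L) (k i : nat) : {set {set L}} :=
  match i with
  | 0 => set0
  | 1 => D1 q om gam k
  | i'.+1 => Dstep q om gam k i (Dcode q om gam k i')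
  end.

Definition valid_choice (q e k : nat) (om gam : nat -> L) : Prop :=
  forall i, (1 <= i <= e)%N ->
    [/\ primitive_in q (Kdim k i) (om i),
        gam i \in Fq q (3 * Kdim k i)
      & gen_field (Fq q (Kdim k i) :|: [set gam i]) = Fq q (3 * Kdim k i)].

End Construction.

Definition code_ratio (L : finFieldType) (q e k : nat) (om gam : nat -> L) : rat :=
  (#|Dcode q om gam k e|)%:R / (Jq q (3 ^ e * k) k)%:R.

(* Main.v *)
Require Import Defs.
From HB Require Import structures.
From mathcomp Require Import all_boot all_order all_algebra finfield cyclic.
From mathcomp Require Import zify ring lra.
Import Order.TTheory GRing.Theory Num.Theory.
Local Open Scope ring_scope.
Set Implicit Arguments. Unset Strict Implicit. Unset Printing Implicit Defensive.

Lemma dvd_pow_sub1 (a t : nat) : (0 < a)%N -> (a - 1 %| a ^ t - 1)%N.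
Proof.
move=> a0; elim: t => [|t IH]; first by rewrite expn0 subnn dvdn0.
have -> : (a ^ t.+1 - 1 = a ^ t * (a - 1) + (a ^ t - 1))%N.
  have h1 : (0 < a ^ t)%N by rewrite expn_gt0 a0.
  rewrite expnS mulnBr muln1 [(a ^ t * a)%N]mulnC.
  have : (a ^ t <= a * a ^ t)%N by rewrite leq_pmull.
  lia.
by rewrite dvdn_add // dvdn_mull.
Qed.

Lemma card_fibers (T T' : finType) (f : T -> T') (A : {set T}) c :
  (forall x, x \in A -> #|[set y in A | f y == f x]| = c) -> #|A| = (c * #|f @: A|)%N.
Proof.
move=> H; rewrite -sum1_card (partition_big_imset f) /=.
rewrite mulnC -sum_nat_const; apply: eq_bigr => W /imsetP[x xA ->].
rewrite -(H x xA) -sum1_card; apply: eq_bigl => y; by rewrite inE.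
Qed.

Section Basics.
Variable L : finFieldType.
Variables (p r q n : nat).
Hypotheses (pp : prime p) (r0 : (0 < r)%N) (qE : q = (p ^ r)%N)
  (cardL : #|L| = (q ^ n)%N) (n0 : (0 < n)%N).

Lemma q_gt1 : (1 < q)%N.
Proof. by rewrite qE -(expn0 p) ltn_exp2l ?prime_gt1. Qed.

Lemma q_gt0 : (0 < q)%N.
Proof. by apply: ltnW q_gt1. Qed.

Lemma pcharL : p \in [pchar L].
Proof. by apply: (@card_finPcharP _ p (r * n)) => //; rewrite cardL qE expnM. Qed.

Lemma pnat_q : [pchar L].-nat q.
Proof.
by rewrite qE pnatX; apply/orP; left; rewrite pnatE // pcharL.
Qed.

Lemma pnat_qm m : [pchar L].-nat (q ^ m)%N.
Proof. by rewrite pnatX pnat_q. Qed.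

Lemma frobD m (x y : L) : (x + y) ^+ (q ^ m) = x ^+ (q ^ m) + y ^+ (q ^ m).
Proof. exact: exprDn_pchar (pnat_qm m). Qed.

Lemma frobN m (x : L) : (- x) ^+ (q ^ m) = - x ^+ (q ^ m).
Proof. exact: exprNn_pchar (pnat_qm m). Qed.

Lemma mem_Fq m (x : L) : (x \in Fq L q m) = (x ^+ (q ^ m) == x).
Proof. by rewrite inE. Qed.

Lemma Fq0 m : (0 : L) \in Fq L q m.
Proof. by rewrite mem_Fq expr0n expn_eq0 (negbTE (lt0n_neq0 q_gt0)). Qed.

Lemma Fq1 m : (1 : L) \in Fq L q m.
Proof. by rewrite mem_Fq expr1n. Qed.

Lemma FqD m x y : x \in Fq L q m -> y \in Fq L q m -> x + y \in Fq L q m.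
Proof. by rewrite !mem_Fq frobD => /eqP-> /eqP->. Qed.

Lemma FqN m x : x \in Fq L q m -> - x \in Fq L q m.
Proof. by rewrite !mem_Fq frobN => /eqP->. Qed.

Lemma FqB m x y : x \in Fq L q m -> y \in Fq L q m -> x - y \in Fq L q m.
Proof. by move=> hx hy; rewrite FqD ?FqN. Qed.

Lemma FqM m x y : x \in Fq L q m -> y \in Fq L q m -> x * y \in Fq L q m.
Proof. by rewrite !mem_Fq exprMn => /eqP-> /eqP->. Qed.

Lemma FqV m x : x \in Fq L q m -> x^-1 \in Fq L q m.
Proof. by rewrite !mem_Fq exprVn => /eqP->. Qed.

Lemma FqX m x t : x \in Fq L q m -> x ^+ t \in Fq L q m.
Proof. by move=> h; elim: t => [|t IH]; rewrite ?expr0 ?Fq1 // exprS FqM. Qed.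

Lemma Fq_sub m d x : x \in Fq L q m -> x \in Fq L q (m * d).
Proof.
rewrite !mem_Fq => /eqP h; elim: d => [|d IH]; first by rewrite muln0 expn0 expr1.
by rewrite mulnS expnD exprM h.
Qed.

Lemma Fq_subset m d : (m %| d)%N -> Fq L q m \subset Fq L q d.
Proof. by case/dvdnP=> t ->; apply/subsetP=> x; rewrite mulnC; apply: Fq_sub. Qed.

Lemma unit_pow (x : L) : x != 0 -> x ^+ (#|L|.-1) = 1.
Proof.
move=> nz; have h := expf_card x.
have c1 : (0 < #|L|)%N by apply: ltnW (finNzRing_gt1 L).
move: h; rewrite -(prednK c1) exprS => h.
by apply: (mulfI nz); rewrite h mulr1.
Qed.

Lemma card_Fq m : (m %| n)%N -> #|Fq L q m| = (q ^ m)%N.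
Proof.
move=> mn.
set N := #|L|.-1.
have N0 : (0 < N)%N by rewrite /N -ltnS prednK ?(ltnW (finNzRing_gt1 L)) // finNzRing_gt1.
pose rs := enum (predC1 (0 : L)).
have Hall : all N.-unity_root rs.
  by apply/allP=> x; rewrite mem_enum /= => nz; rewrite unity_rootE unit_pow.
have Huniq : uniq rs by rewrite enum_uniq.
have Hsize : (N <= size rs)%N by rewrite /rs -cardE cardC1.
have /hasP[z _ zprim] := has_prim_root N0 Hall Huniq Hsize.
set d := (q ^ m - 1)%N.
have qm0 : (0 < q ^ m)%N by rewrite expn_gt0 q_gt0.
have dN : (d %| N)%N.
  rewrite /N cardL /d; case/dvdnP: mn => t ->; rewrite mulnC expnM -subn1.
  exact: dvd_pow_sub1.
have d0 : (0 < d)%N.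
  have m0 : (0 < m)%N.
    by move: mn; case: (m) => //; rewrite dvd0n => /eqP n00; move: n0; rewrite n00.
  by rewrite /d subn_gt0 -{1}(expn0 q) ltn_exp2l ?q_gt1.
have wprim := dvdn_prim_root zprim dN.
set w := z ^+ (N %/ d) in wprim.
have E : Fq L q m :\ 0 = [set w ^+ (val i) | i : 'I_d].
  apply/setP=> x; rewrite !inE; apply/idP/idP.
  - case/andP=> nz /eqP hx.
    have xd : x ^+ d = 1.
      apply: (mulfI nz); rewrite mulr1 -exprS /d subn1 prednK //.
    have [i ->] := prim_rootP wprim xd.
    by apply/imsetP; exists i.
  - case/imsetP=> i _ ->.
    have wd := prim_expr_order wprim.
    have nz : w ^+ i != 0.
      apply/eqP=> h0; move: (f_equal (fun y => y ^+ d) h0) => /=.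
      rewrite -exprM mulnC exprM wd expr1n expr0n (negbTE (lt0n_neq0 d0)).
      by move/eqP; rewrite oner_eq0.
    rewrite nz /= -(subnK (qm0 : (1 <= q ^ m)%N)) addn1 exprS -/w -/d.
    by rewrite -[(w ^+ i) ^+ d]exprM mulnC exprM wd expr1n mulr1.
have := cardsD1 0 (Fq L q m); rewrite Fq0 E card_imset; last first.
  move=> i j /eqP; rewrite (eq_prim_root_expr wprim) !modn_small ?ltn_ord //.
  by move/eqP/val_inj.
by rewrite card_ord /d add1n subn1 prednK.
Qed.


Lemma qpoly0 (al be : L) (U : {set L}) :
  (q < #|U|)%N -> (forall u, u \in U -> al * u ^+ q + be * u = 0) -> al = 0 /\ be = 0.
Proof.
move=> cU H.
pose P : {poly L} := al *: 'X^q + be *: 'X.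
have P0 : P = 0.
  apply: contraTeq cU => nzP; rewrite -leqNgt.
  have := max_poly_roots nzP (rs := enum U).
  rewrite enum_uniq cardE => /(_ _ isT) h.
  have szP : (size P <= q.+1)%N.
    apply: leq_trans (size_polyD _ _) _; rewrite geq_max.
    rewrite (leq_trans (size_scale_leq _ _)) ?size_polyXn //.
    by rewrite (leq_trans (size_scale_leq _ _)) ?size_polyX // ltnS ltnW // q_gt1.
  rewrite -ltnS; apply: leq_trans szP; apply: h.
  by apply/allP=> u; rewrite mem_enum => uU; rewrite /root !hornerE H.
have q1 : (q != 1)%N by rewrite neq_ltn q_gt1 orbT.
split.
- have := f_equal (fun P : {poly L} => P`_q) P0.
  by rewrite /= coefD !coefZ coefXn coefX eqxx (negbTE q1) mulr1 mulr0 addr0 coef0.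
- have := f_equal (fun P : {poly L} => P`_1) P0.
  by rewrite /= coefD !coefZ coefXn coefX eqxx eq_sym (negbTE q1) mulr1 mulr0 add0r coef0.
Qed.

Lemma inv_closed (S : {set L}) :
  1 \in S -> (forall x y, x \in S -> y \in S -> x * y \in S) ->
  forall x, x \in S -> x^-1 \in S.
Proof.
move=> S1 SM x xS.
have SX t : x ^+ t \in S by elim: t => [|t IH]; rewrite ?expr0 // exprS SM.
case: (eqVneq x 0) => [x0|nz]; first by rewrite x0 invr0 -x0.
have c1 : (0 < #|L|.-1)%N by rewrite -ltnS prednK ?(ltnW (finNzRing_gt1 L)) // finNzRing_gt1.
have : x ^+ (#|L|.-1) = 1 := unit_pow nz.
rewrite -(prednK c1) exprS => h.
have -> : x^-1 = x ^+ (#|L|.-1).-1.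
  by apply: (mulfI nz); rewrite h divff.
exact: SX.
Qed.


Section Ext.
Variables (K : nat) (w g : L).
Hypotheses (K1 : (1 < K)%N) (Kn : (3 * K %| n)%N) (wprim : primitive_in q K w)
  (gE : g \in Fq L q (3 * K))
  (gen : gen_field (Fq L q K :|: [set g]) = Fq L q (3 * K)).

Local Notation F := (Fq L q K).
Local Notation E := (Fq L q (3 * K)).

Lemma Kn' : (K %| n)%N.
Proof. exact: dvdn_trans (dvdn_mull 3 (dvdnn K)) Kn. Qed.

Lemma cardF : #|F| = (q ^ K)%N.
Proof. exact: card_Fq Kn'. Qed.

Lemma cardE3 : #|E| = (q ^ (3 * K))%N.
Proof. exact: card_Fq Kn. Qed.

Lemma FE x : x \in F -> x \in E.
Proof. by move=> h; rewrite mulnC; apply: Fq_sub. Qed.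

Lemma no_quad s t : s \in F -> t \in F -> g ^+ 2 != s + t * g.
Proof.
move=> sF tF; apply/eqP => hg.
pose S := [set a + c * g | a in F, c in F].
have memS a c : a \in F -> c \in F -> a + c * g \in S.
  by move=> aF cF; apply/imset2P; exists a c.
have SB x y : x \in S -> y \in S -> x - y \in S.
  case/imset2P=> a1 c1 a1F c1F -> /imset2P[a2 c2 a2F c2F ->].
  have -> : a1 + c1 * g - (a2 + c2 * g) = (a1 - a2) + (c1 - c2) * g by ring.
  by rewrite memS ?FqB.
have SM x y : x \in S -> y \in S -> x * y \in S.
  case/imset2P=> a1 c1 a1F c1F -> /imset2P[a2 c2 a2F c2F ->].
  have -> : (a1 + c1 * g) * (a2 + c2 * g) = a1 * a2 + (a1 * c2 + c1 * a2) * g + c1 * c2 * g ^+ 2 by ring.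
  rewrite hg.
  have -> : a1 * a2 + (a1 * c2 + c1 * a2) * g + c1 * c2 * (s + t * g) =
     (a1 * a2 + c1 * c2 * s) + (a1 * c2 + c1 * a2 + c1 * c2 * t) * g by ring.
  by rewrite memS ?FqD ?FqM.
have S0 : 0 \in S by have := memS 0 0 (Fq0 _) (Fq0 _); rewrite mul0r addr0.
have S1 : 1 \in S by have := memS 1 0 (Fq1 _) (Fq0 _); rewrite mul0r addr0.
have subS : is_subfield S.
  apply/and4P; split => //.
  - apply/forall_inP => x xS; apply/forall_inP => y yS.
    by rewrite SB ?SM.
  - by apply/forall_inP => x xS; apply: inv_closed.
have ES : E \subset S.
  rewrite -gen; apply: bigcap_inf; rewrite subS /=.
  apply/subsetP => x; rewrite in_setU in_set1 => /orP[xF|/eqP->].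
  - by have := memS x 0 xF (Fq0 _); rewrite mul0r addr0.
  - by have := memS 0 1 (Fq0 _) (Fq1 _); rewrite mul1r add0r.
have := subset_leq_card ES.
rewrite cardE3 /S curry_imset2X.
move/leq_trans => /(_ _ (leq_imset_card _ _)); rewrite cardsX cardF -expnD.
rewrite leq_exp2l ?q_gt1 //; lia.
Qed.

Lemma indep x y z : x \in F -> y \in F -> z \in F ->
  x + y * g + z * g ^+ 2 = 0 -> [/\ x = 0, y = 0 & z = 0].
Proof.
move=> xF yF zF h.
have z0 : z = 0.
  apply/eqP; apply: contraTT (no_quad (FqM (FqN xF) (FqV zF)) (FqM (FqN yF) (FqV zF))).
  move=> nz; rewrite negbK; apply/eqP.
  apply: (mulfI nz); rewrite mulrDr.
  have zz : z * z^-1 = 1 by rewrite mulfV.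
  have -> : z * (- x * z^-1) = - x * (z * z^-1) by ring.
  have -> : z * (- y * z^-1 * g) = - y * g * (z * z^-1) by ring.
  rewrite zz !mulr1.
  apply/eqP; rewrite -subr_eq0 -h; apply/eqP; ring.
move: h; rewrite z0 mul0r addr0 => h.
have y0 : y = 0.
  apply/eqP; apply: contraTT (no_quad (Fq0 K) (FqM (FqN xF) (FqV yF))).
  move=> nz; rewrite negbK; apply/eqP.
  have gv : g = - x * y^-1.
    apply: (mulfI nz).
    have -> : y * (- x * y^-1) = - x * (y * y^-1) by ring.
    rewrite mulfV // mulr1.
    apply/eqP; rewrite -subr_eq0 -h; apply/eqP; ring.
  by rewrite add0r -gv expr2.
by move: h; rewrite y0 mul0r addr0 => ->.
Qed.

Lemma indep3 x y z x' y' z' : x \in F -> y \in F -> z \in F ->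
  x' \in F -> y' \in F -> z' \in F ->
  x + y * g + z * g ^+ 2 = x' + y' * g + z' * g ^+ 2 -> [/\ x = x', y = y' & z = z'].
Proof.
move=> xF yF zF x'F y'F z'F h.
have := @indep (x - x') (y - y') (z - z') (FqB xF x'F) (FqB yF y'F) (FqB zF z'F).
case.
  have -> : x - x' + (y - y') * g + (z - z') * g ^+ 2 =
    (x + y * g + z * g ^+ 2) - (x' + y' * g + z' * g ^+ 2) by ring.
  by rewrite h subrr.
by move=> /eqP; rewrite subr_eq0 => /eqP -> /eqP; rewrite subr_eq0 => /eqP -> /eqP; rewrite subr_eq0 => /eqP ->.
Qed.

Lemma decomp b : b \in E -> exists x, exists y, exists z,
  [/\ x \in F, y \in F, z \in F & b = x + y * g + z * g ^+ 2].
Proof.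
move=> bE.
pose f (t : (L * L) * L) := t.1.1 + t.1.2 * g + t.2 * g ^+ 2.
pose T := f @: setX (setX F F) F.
have cT : #|T| = #|E|.
  rewrite card_in_imset; first by rewrite !cardsX cardF cardE3 -!expnD; congr (_ ^ _)%N; lia.
  case=> [[x y] z] [[x' y'] z']; rewrite !in_setX /= => /andP[/andP[xF yF] zF] /andP[/andP[x'F y'F] z'F].
  by rewrite /f /= => /(indep3 xF yF zF x'F y'F z'F) [-> -> ->].
have TE : T \subset E.
  apply/subsetP => t /imsetP[[[x y] z]]; rewrite !in_setX /= => /andP[/andP[xF yF] zF] ->.
  rewrite /f /=; apply: FqD; [apply: FqD; [exact: FE | apply: FqM => //; exact: FE] | apply: FqM; [exact: FE | exact: FqX]].
have bT : b \in T by rewrite (subset_cardP cT TE).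
case/imsetP: bT => [[[x y] z]].
by rewrite !in_setX /= => /andP[/andP[xF yF] zF] ->; exists x, y, z.
Qed.

Lemma qK_gt3 : (3 < q ^ K)%N.
Proof.
have h1 : (q ^ 2 <= q ^ K)%N := leq_pexp2l q_gt0 K1.
have h2 : (2 ^ 2 <= q ^ 2)%N by rewrite leq_exp2r // q_gt1.
exact: leq_trans h2 h1.
Qed.

Lemma cardF0 : #|F :\ 0| = (q ^ K - 1)%N.
Proof. by have := cardsD1 0 F; rewrite Fq0 cardF add1n => ->; rewrite subn1. Qed.

Lemma w_nz : w != 0.
Proof.
case: wprim => wF wgen; apply/eqP => w0.
have sub : F :\ 0 \subset [set 1].
  apply/subsetP => x; rewrite in_setD1 => /andP[nz xF].
  have [t xt] := wgen x xF nz; move: nz; rewrite xt w0.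
  by case: t {xt} => [|t]; rewrite ?expr0 ?in_set1 ?eqxx // exprS mul0r eqxx.
have := subset_leq_card sub; rewrite cards1 cardF0.
have := qK_gt3; lia.
Qed.

Lemma w_prim : (q ^ K - 1).-primitive_root w.
Proof.
case: wprim => wF wgen.
have qK0 : (0 < q ^ K - 1)%N by have := qK_gt3; lia.
have wN : w ^+ (q ^ K - 1) = 1.
  apply: (mulfI w_nz); rewrite mulr1 -exprS subn1 prednK ?expn_gt0 ?q_gt0 //.
  by apply/eqP; rewrite -mem_Fq.
have [m mprim mdvd] := prim_order_exists qK0 wN.
have m0 : (0 < m)%N := prim_order_gt0 mprim.
suff -> : (q ^ K - 1)%N = m by [].
apply/eqP; rewrite eqn_leq (dvdn_leq qK0 mdvd) andbT.
have sub : F :\ 0 \subset [set w ^+ (val i) | i : 'I_m].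
  apply/subsetP => x; rewrite in_setD1 => /andP[nz xF].
  have [t ->] := wgen x xF nz.
  apply/imsetP; exists (Ordinal (ltn_pmod t m0)) => //=.
  by rewrite (prim_expr_mod mprim).
have := subset_leq_card sub; rewrite cardF0 => h; apply: leq_trans h _.
apply: leq_trans (leq_imset_card _ _) _; by rewrite card_ord.
Qed.

Lemma prim_lemma j j' x : (j < q - 1)%N -> (j' < q - 1)%N -> x \in F -> x != 0 ->
  w ^+ j = w ^+ j' * x ^+ (q - 1) -> j = j' /\ x ^+ (q - 1) = 1.
Proof.
move=> jq j'q xF nz h.
case: wprim => wF wgen.
have [t xt] := wgen x xF nz.
have jj : j = j'.
  move: h; rewrite xt -exprM -exprD => /eqP.
  rewrite (eq_prim_root_expr w_prim) => /eqP h.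
  have dv : (q - 1 %| q ^ K - 1)%N by have := dvd_pow_sub1 K q_gt0.
  have := congr1 (fun v => v %% (q - 1))%N h => /=.
  by rewrite !(modn_dvdm _ dv) addnC modnMDl !modn_small.
split => //.
move: h; rewrite jj => /eqP; rewrite -subr_eq0 -{1}(mulr1 (w ^+ j')) -mulrBr mulf_eq0.
rewrite expf_eq0 (negbTE w_nz) andbF /= subr_eq0 => /eqP.
by move=> ->.
Qed.

Definition ph (a : L) (j : nat) (u : L) := u + w ^+ j * (u ^+ q + a * u) * g.

Lemma key a a' j j' (U U' : {set L}) (be : L) :
  a \in F -> a' \in F -> (j < q - 1)%N -> (j' < q - 1)%N ->
  U \subset F -> U' \subset F -> (q < #|U|)%N -> be \in E -> be != 0 ->
  (forall u, u \in U -> exists2 u', u' \in U' & be * ph a j u = ph a' j' u') ->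
  [/\ a = a', j = j', be ^+ q = be & forall u, u \in U -> be * u \in U'].
Proof.
move=> aF a'F jq j'q UF U'F cU bE nzb H.
have [x [y [z [xF yF zF bxyz]]]] := decomp bE.
have g3E : g ^+ 3 \in E by apply: FqX.
have [c0 [c1 [c2 [c0F c1F c2F g3]]]] := decomp g3E.
have wF : w \in F by case: wprim.
pose f (a0 : L) (j0 : nat) (u : L) := w ^+ j0 * (u ^+ q + a0 * u).
have fF a0 j0 u : a0 \in F -> u \in F -> f a0 j0 u \in F.
  move=> a0F uF; apply: FqM; first exact: FqX.
  by apply: FqD; [apply: FqX | apply: FqM].
have coef : forall u, u \in U -> exists2 u', u' \in U' &
   [/\ y * f a j u + z * u + z * f a j u * c2 = 0,
       x * u + z * f a j u * c0 = u' &
       x * f a j u + y * u + z * f a j u * c1 = f a' j' u'].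
  move=> u uU; have [u' u'U e] := H u uU; exists u' => //.
  have uF : u \in F by apply: (subsetP UF).
  have u'F : u' \in F by apply: (subsetP U'F).
  have e2 : (x * u + z * f a j u * c0) + (x * f a j u + y * u + z * f a j u * c1) * g
          + (y * f a j u + z * u + z * f a j u * c2) * g ^+ 2
          = u' + f a' j' u' * g + 0 * g ^+ 2.
    rewrite mul0r addr0.
    have -> : u' + f a' j' u' * g = ph a' j' u' by [].
    rewrite -e bxyz /ph.
    have -> : (x + y * g + z * g ^+ 2) * (u + w ^+ j * (u ^+ q + a * u) * g) =
      x * u + (x * f a j u + y * u) * g + (y * f a j u + z * u) * g ^+ 2 + z * f a j u * g ^+ 3.
      rewrite /f; ring.
    rewrite g3; ring.
  have := indep3 _ _ _ _ _ _ e2.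
  case.
  - by apply: FqD; [apply: FqM | apply: FqM; [apply: FqM; [|apply: fF]|]].
  - by apply: FqD; [apply: FqD; apply: FqM => //; apply: fF | apply: FqM; [apply: FqM; [|apply: fF]|]].
  - by apply: FqD; [apply: FqD; apply: FqM => //; apply: fF | apply: FqM; [apply: FqM; [|apply: fF]|]].
  - by [].
  - by apply: fF.
  - exact: Fq0.
  - by move=> -> -> ->.
have [al0 be0] : (y + z * c2) * w ^+ j = 0 /\ (y + z * c2) * w ^+ j * a + z = 0.
  apply: (qpoly0 cU) => u uU.
  have [u' _ [h1 _ _]] := coef u uU.
  rewrite -h1 /f; ring.
have z0 : z = 0 by move: be0; rewrite al0 mul0r add0r.
have y0 : y = 0.
  by move: al0; rewrite z0 mul0r addr0 => /eqP; rewrite mulf_eq0 expf_eq0 (negbTE w_nz) andbF orbF => /eqP.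
have bx : be = x by rewrite bxyz y0 z0 !mul0r !addr0.
have nzx : x != 0 by rewrite -bx.
have coef2 : forall u, u \in U -> x * u \in U' /\ x * f a j u = f a' j' (x * u).
  move=> u uU; have [u' u'U [_ h2 h3]] := coef u uU.
  move: h2 h3; rewrite y0 z0 !mul0r !addr0 => h2 h3.
  by rewrite h2 h3.
have [e1 e2] : x * w ^+ j - w ^+ j' * x ^+ q = 0 /\ x * w ^+ j * a - w ^+ j' * a' * x = 0.
  apply: (qpoly0 cU) => u uU.
  have [_ h] := coef2 u uU.
  have : x * f a j u - f a' j' (x * u) = 0 by rewrite h subrr.
  rewrite /f exprMn => <-; ring.
have qS : q = (q - 1).+1 by rewrite subn1 prednK ?q_gt0.
have e3 : w ^+ j = w ^+ j' * x ^+ (q - 1).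
  apply: (mulfI nzx); apply/eqP; rewrite -subr_eq0 -e1; apply/eqP.
  rewrite {2}qS exprS; ring.
have [jj xq1] := prim_lemma jq j'q xF nzx e3.
have xq : x ^+ q = x by rewrite qS exprS xq1 mulr1.
split => //.
- move: e2; rewrite jj => /eqP; rewrite subr_eq0 => /eqP h.
  have nz2 : x * w ^+ j' != 0 by rewrite mulf_neq0 // expf_neq0 // w_nz.
  apply: (mulfI nz2); rewrite h; ring.
- by rewrite bx.
- by move=> u uU; rewrite bx; case: (coef2 u uU).
Qed.

Definition img a j (U : {set L}) b : {set L} := [set b * ph a j u | u in U].

Definition good m (U : {set L}) :=
  [/\ U \subset Fq L q m, (q < #|U|)%N &
      forall c u, c \in Fq L q 1 -> c != 0 -> u \in U -> c * u \in U].

Definition Dst (D : {set {set L}}) : {set {set L}} :=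
  \bigcup_(a in F) \bigcup_(j < q.-1) \bigcup_(U in D) [set img a j U b | b in E :\ 0].

Lemma Fq1q c : c \in Fq L q 1 -> c ^+ q = c.
Proof. by rewrite mem_Fq expn1 => /eqP. Qed.

Lemma ph_scale c a j u : c ^+ q = c -> ph a j (c * u) = c * ph a j u.
Proof. by move=> cq; rewrite /ph exprMn cq; ring. Qed.

Lemma img_scale c a j U b : good K U -> c \in Fq L q 1 -> c != 0 ->
  img a j U (c * b) = img a j U b.
Proof.
case=> _ _ cl c1 nzc; apply/setP => v; apply/imsetP/imsetP => [[u uU ->]|[u uU ->]].
- exists (c * u); first exact: cl.
  by rewrite ph_scale ?Fq1q //; ring.
- exists (c^-1 * u); first by apply: cl => //; [exact: FqV | rewrite invr_eq0].
  rewrite ph_scale ?Fq1q ?FqV //.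
  have : c * c^-1 = 1 by rewrite mulfV.
  move=> cc; rewrite -[LHS]mul1r -cc; ring.
Qed.

Lemma E0F1 c : c \in Fq L q 1 -> c \in E.
Proof. by move=> h; have := Fq_sub (3 * K) h; rewrite mul1n. Qed.

Lemma img_inj a a' j j' U U' b b' :
  a \in F -> a' \in F -> (j < q - 1)%N -> (j' < q - 1)%N ->
  good K U -> good K U' -> b \in E -> b != 0 -> b' \in E -> b' != 0 ->
  img a j U b = img a' j' U' b' ->
  [/\ a = a', j = j', U = U' & (b' / b) \in Fq L q 1].
Proof.
move=> aF a'F jq j'q gU gU' bE nzb b'E nzb' e.
case: (gU) => UF cU clU; case: (gU') => U'F cU' clU'.
have k1 := key a'F aF j'q jq U'F UF cU' (FqM b'E (FqV bE)) (mulf_neq0 nzb' (invr_neq0 nzb)).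
have k2 := key aF a'F jq j'q UF U'F cU (FqM bE (FqV b'E)) (mulf_neq0 nzb (invr_neq0 nzb')).
case: k1.
  move=> u' u'U; have : b' * ph a' j' u' \in img a j U b by rewrite e; apply/imsetP; exists u'.
  case/imsetP => u uU hu; exists u => //.
  have -> : b' / b * ph a' j' u' = b^-1 * (b' * ph a' j' u') by ring.
  by rewrite hu mulrA mulVf // mul1r.
move=> ea ej cq sub1.
case: k2.
  move=> u uU; have : b * ph a j u \in img a' j' U' b' by rewrite -e; apply/imsetP; exists u.
  case/imsetP => u' u'U hu; exists u' => //.
  have -> : b / b' * ph a j u = b'^-1 * (b * ph a j u) by ring.
  by rewrite hu mulrA mulVf // mul1r.
move=> _ _ cq' sub2.
have c1 : b' / b \in Fq L q 1 by rewrite mem_Fq expn1 cq.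
have c1' : b / b' \in Fq L q 1 by rewrite mem_Fq expn1 cq'.
split => //.
apply/setP => u; apply/idP/idP => uU.
- have := clU' _ _ c1 (mulf_neq0 nzb' (invr_neq0 nzb)) (sub2 u uU).
  have -> : b' / b * (b / b' * u) = (b' / b') * (b / b) * u by ring.
  by rewrite !mulfV // !mul1r.
- have := clU _ _ c1' (mulf_neq0 nzb (invr_neq0 nzb')) (sub1 u uU).
  have -> : b / b' * (b' / b * u) = (b' / b') * (b / b) * u by ring.
  by rewrite !mulfV // !mul1r.
Qed.

Lemma fF a j u : a \in F -> u \in F -> w ^+ j * (u ^+ q + a * u) \in F.
Proof.
have wF : w \in F by case: wprim.
move=> aF uF; apply: FqM; first exact: FqX.
by apply: FqD; [apply: FqX | apply: FqM].
Qed.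

Lemma phE a j u : a \in F -> u \in F -> ph a j u \in E.
Proof.
by move=> aF uF; rewrite /ph; apply: FqD; [apply: FE | apply: FqM => //; apply: FE; apply: fF].
Qed.

Lemma ph_inj a j u v : a \in F -> u \in F -> v \in F -> ph a j u = ph a j v -> u = v.
Proof.
move=> aF uF vF h.
have h' : u + w ^+ j * (u ^+ q + a * u) * g + 0 * g ^+ 2 = v + w ^+ j * (v ^+ q + a * v) * g + 0 * g ^+ 2.
  by rewrite !mul0r !addr0.
by case: (indep3 uF (fF j aF uF) (Fq0 _) vF (fF j aF vF) (Fq0 _) h').
Qed.

Lemma EnzE b : b \in E :\ 0 -> b != 0 /\ b \in E.
Proof. by rewrite in_setD1 => /andP[]. Qed.

Lemma Dst_good (D : {set {set L}}) : (forall U, U \in D -> good K U) -> forall W, W \in Dst D -> good (3 * K) W.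
Proof.
move=> gD W /bigcupP[a aF /bigcupP[j _ /bigcupP[U UD /imsetP[b /EnzE[nzb bE] ->]]]].
case: (gD U UD) => UF cU clU.
have uF u : u \in U -> u \in F by move=> uU; apply: (subsetP UF).
split.
- apply/subsetP => v /imsetP[u uU ->]; apply: FqM => //; apply: phE => //; exact: uF.
- rewrite /img card_in_imset // => u v uU vU /(mulfI nzb).
  by apply: ph_inj => //; apply: uF.
- move=> c v c1 nzc /imsetP[u uU ->]; apply/imsetP; exists (c * u); first exact: clU.
  by rewrite ph_scale ?Fq1q //; ring.
Qed.

Lemma Dst_card (D : {set {set L}}) : (forall U, U \in D -> good K U) ->
  #|Dst D| = (q ^ K * (q ^ (3 * K) - 1) * #|D|)%N.
Proof.
move=> gD.
pose X := setX (setX (setX F [set: 'I_(q.-1)]) D) (E :\ 0).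
pose phi (x : ((L * 'I_(q.-1)) * {set L}) * L) := img x.1.1.1 x.1.1.2 x.1.2 x.2.
have DX : Dst D = phi @: X.
  apply/setP => W; apply/idP/imsetP.
  - case/bigcupP=> a aF /bigcupP[j _ /bigcupP[U UD /imsetP[b bE ->]]].
    by exists (((a, j), U), b) => //; rewrite !in_setX /= aF UD bE in_setT.
  - case=> [[[[a j] U] b]]; rewrite !in_setX /= => /andP[/andP[/andP[aF _] UD] bE] ->.
    apply/bigcupP; exists a => //; apply/bigcupP; exists j => //.
    by apply/bigcupP; exists U => //; apply/imsetP; exists b.
have cE0 : #|E :\ 0| = (q ^ (3 * K) - 1)%N.
  by have := cardsD1 0 E; rewrite Fq0 cardE3 add1n => ->; rewrite subn1.
have cX : #|X| = (q ^ K * q.-1 * #|D| * (q ^ (3 * K) - 1))%N.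
  by rewrite !cardsX cardF cardsT card_ord cE0.
have fib : forall x, x \in X -> #|[set y in X | phi y == phi x]| = q.-1.
  case=> [[[a j] U] b]; rewrite !in_setX /= => /andP[/andP[/andP[aF _] UD] /EnzE[nzb bE]].
  have jq : (j < q - 1)%N by rewrite subn1.
  have -> : [set y in X | phi y == phi (((a, j), U), b)] =
            [set (((a, j), U), c * b) | c in Fq L q 1 :\ 0].
    apply/setP => y; rewrite inE; apply/andP/imsetP.
    - case: y => [[[a' j'] U'] b']; rewrite !in_setX /=.
      case=> /andP[/andP[/andP[a'F _] U'D] /EnzE[nzb' b'E]] /eqP e.
      have j'q : (j' < q - 1)%N by rewrite subn1.
      have [ea ej eU c1] := img_inj aF a'F jq j'q (gD U UD) (gD U' U'D) bE nzb b'E nzb' (esym e).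
      exists (b' / b); first by rewrite in_setD1 c1 mulf_neq0 // invr_eq0.
      by rewrite ea eU (val_inj ej) mulfVK //.
    - case=> c; rewrite in_setD1 => /andP[nzc c1] ->; split.
      + by rewrite !in_setX /= aF UD in_setT in_setD1 mulf_neq0 //= FqM // E0F1.
      + by rewrite /phi /= img_scale //; apply: gD.
  rewrite card_imset; last by move=> c c' [] /(mulIf nzb).
  by have := cardsD1 0 (Fq L q 1); rewrite Fq0 card_Fq ?dvd1n // expn1 add1n => h; rewrite [in RHS]h.
have := card_fibers fib; rewrite -DX cX => h.
have q1 : (0 < q.-1)%N by rewrite -subn1 subn_gt0 q_gt1.
apply/eqP; rewrite -(eqn_pmul2l q1) -h; apply/eqP.
by rewrite mulnC !mulnA [(_ * q.-1)%N]mulnC -!mulnA; congr (_ * _)%N; rewrite mulnC -mulnA [(#|D| * _)%N]mulnC.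
Qed.

End Ext.

End Basics.

Definition prodP (q k i : nat) : nat :=
  \prod_(t < i) (q ^ (Kdim k t.+1) * (q ^ (3 * Kdim k t.+1) - 1)).

Section Main.
Variables (L : finFieldType) (p r q e k : nat) (om gam : nat -> L).
Hypotheses (pp : prime p) (r0 : (0 < r)%N) (qE : q = (p ^ r)%N) (k2 : (2 <= k)%N)
  (e1 : (1 <= e)%N) (cardL : #|L| = (q ^ (3 ^ e * k))%N) (vc : valid_choice q e k om gam).

Let n0 : (0 < 3 ^ e * k)%N.
Proof. by rewrite muln_gt0 expn_gt0 /=; apply: leq_trans k2. Qed.

Lemma Kdim_gt1 i : (1 < Kdim k i)%N.
Proof. by rewrite /Kdim; apply: leq_trans k2 _; rewrite leq_pmull // expn_gt0. Qed.

Lemma Kdim1 : Kdim k 1 = k.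
Proof. by rewrite /Kdim expn0 mul1n. Qed.

Lemma KdimS i : (1 <= i)%N -> Kdim k i.+1 = (3 * Kdim k i)%N.
Proof. by case: i => // i _; rewrite /Kdim !subn1 /= expnS mulnA. Qed.

Lemma Kdim_dvd i : (1 <= i <= e)%N -> (3 * Kdim k i %| 3 ^ e * k)%N.
Proof.
case/andP=> i1 ie; rewrite -KdimS // /Kdim subSS subn0.
by apply: dvdn_mul => //; rewrite dvdn_exp2l.
Qed.

Lemma D1E : Dcode q om gam k 1 = Dst q k (om 1) (gam 1) [set Fq L q k].
Proof.
rewrite /= /D1 /Dst; apply: eq_bigr => a _; apply: eq_bigr => j _.
rewrite big_set1 /orb; apply: eq_imset => b.
by rewrite /img -imset_comp.
Qed.

Lemma DcodeS i : (1 <= i)%N ->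
  Dcode q om gam k i.+1 = Dst q (Kdim k i.+1) (om i.+1) (gam i.+1) (Dcode q om gam k i).
Proof. by case: i. Qed.

Lemma Dcode_prop i : (1 <= i <= e)%N ->
  (forall W, W \in Dcode q om gam k i -> good q (3 * Kdim k i) W) /\
  #|Dcode q om gam k i| = prodP q k i.
Proof.
elim: i => [|i IH] //; case/andP => i1 ie.
have [wpr gE gen] := vc (i:=i.+1) (introT andP (conj i1 ie)).
have K1 := Kdim_gt1 i.+1.
have Kn := Kdim_dvd (introT andP (conj i1 ie)).
case: i IH i1 ie wpr gE gen K1 Kn => [|i] IH _ ie wpr gE gen K1 Kn.
- rewrite D1E; move: wpr gE gen K1 Kn; rewrite Kdim1 => wpr gE gen K1 Kn.
  have gD : forall U, U \in [set Fq L q k] -> good q k U.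
    move=> U; rewrite in_set1 => /eqP ->; split => //.
    + rewrite (card_Fq pp r0 qE cardL n0); last by apply: dvdn_mull.
      by rewrite -{1}(expn1 q) ltn_exp2l // (q_gt1 pp r0 qE).
    + move=> c u c1 _ uk; apply: FqM => //.
      by have := Fq_sub k c1; rewrite mul1n.
  split.
  + exact: (Dst_good pp r0 qE cardL n0 K1 Kn wpr gE gen gD).
  + rewrite (Dst_card pp r0 qE cardL n0 K1 Kn wpr gE gen gD) cards1 muln1.
    rewrite /prodP big_ord_recr big_ord0 /= Kdim1; lia.
- have i1 : (1 <= i.+1)%N by [].
  have [IH1 IH2] := IH (introT andP (conj i1 (ltnW ie))).
  rewrite DcodeS //.
  have gD : forall U, U \in Dcode q om gam k i.+1 -> good q (Kdim k i.+2) U.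
    by move=> U UD; rewrite KdimS //; apply: IH1.
  split.
  + exact: (Dst_good pp r0 qE cardL n0 K1 Kn wpr gE gen gD).
  + rewrite (Dst_card pp r0 qE cardL n0 K1 Kn wpr gE gen gD) IH2.
    by rewrite /prodP [in RHS]big_ord_recr /= mulnC.
Qed.

Lemma card_code : #|Dcode q om gam k e| = prodP q k e.
Proof. by case: (Dcode_prop (i:=e) _) => //; rewrite e1 leqnn. Qed.

End Main.

Lemma KdimSt k t : Kdim k t.+1 = (3 ^ t * k)%N.
Proof. by rewrite /Kdim subn1. Qed.

Lemma ratio_core (q s a T N Nk A B MM P e : rat) :
  2 <= q -> 2 <= s -> a = q * s -> s <= T -> N = Nk * a -> 1 <= Nk ->
  A * (a - 1) = N - 1 -> q * (B * (s - 1)) <= N - q -> Nk <= A -> Nk <= B ->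
  MM = Nk * Nk -> 0 <= P -> P <= MM -> T * (MM - P) <= e * MM -> 0 <= e ->
  0 < A * B /\ `|P / (A * B) - 1| <= (e + 6) / s.
Proof.
move=> q2 s2 aE sT NE Nk1 HA HB NA NB MME P0 PM HT e0.
have A0 : 0 < A by lra.
have B0 : 0 < B by lra.
have J0 : 0 < A * B by rewrite mulr_gt0.
have MM0 : 0 < MM by rewrite MME mulr_gt0 //; lra.
have JM : MM <= A * B.
  rewrite MME; apply: ler_pM => //; lra.
have a1 : 0 < a - 1 by rewrite aE; nra.
have aq : 0 < a - q by rewrite aE; nra.
have HB' : B * (a - q) <= N by rewrite aE; nra.
have HA' : A * (a - 1) <= N by lra.
have HJ : A * B * ((a - 1) * (a - q)) <= N * N.
  have -> : A * B * ((a - 1) * (a - q)) = (A * (a - 1)) * (B * (a - q)) by ring.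
  apply: ler_pM => //; first by rewrite mulr_ge0 //; lra.
  by rewrite mulr_ge0 //; lra.
have poly : a * a * s <= (6 + s) * ((a - 1) * (a - q)).
  rewrite -subr_ge0.
  have -> : (6 + s) * ((a - 1) * (a - q)) - a * a * s =
     q * ((q - 2) * s * (5 * s - 6) + (s - 2) * (9 * s + 1) + 8) by rewrite aE; ring.
  apply: mulr_ge0; first lra.
  have h1 : 0 <= (q - 2) * s * (5 * s - 6) by rewrite !mulr_ge0 //; lra.
  have h2 : 0 <= (s - 2) * (9 * s + 1) by rewrite !mulr_ge0 //; lra.
  lra.
have JS : A * B * s <= (6 + s) * MM.
  have dpos : 0 < (a - 1) * (a - q) by rewrite mulr_gt0.
  rewrite -(ler_pM2r dpos).
  apply: le_trans (_ : MM * (a * a * s) <= _).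
    have -> : A * B * s * ((a - 1) * (a - q)) = A * B * ((a - 1) * (a - q)) * s by ring.
    have -> : MM * (a * a * s) = (N * N) * s by rewrite MME NE; ring.
    by rewrite ler_pM2r //; lra.
  have -> : (6 + s) * MM * ((a - 1) * (a - q)) = MM * ((6 + s) * ((a - 1) * (a - q))) by ring.
  rewrite ler_pM2l //; lra.
have key : (A * B - P) * s <= (e + 6) * (A * B).
  have h1 : (MM - P) * s <= (MM - P) * T by rewrite ler_wpM2l ?subr_ge0.
  have h2 : (e + 6) * MM <= (e + 6) * (A * B) by rewrite ler_wpM2l //; lra.
  have h3 : (MM - P) * T = T * (MM - P) by ring.
  nra.
split => //.
have -> : P / (A * B) - 1 = - ((A * B - P) / (A * B)).
  by field; rewrite !gt_eqF.
rewrite normrN ger0_norm; last by rewrite divr_ge0 //; lra.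
have s0 : 0 < s by lra.
rewrite ler_pdivrMr // mulrAC ler_pdivlMr //.
Qed.

Section Asym.
Variables (q k : nat).
Hypotheses (q2 : (1 < q)%N) (k2 : (1 < k)%N).

Let q0 : (0 < q)%N. Proof. exact: ltnW. Qed.

Definition MMe e : nat := \prod_(t < e) q ^ (4 * Kdim k t.+1).

Lemma MMeE e : MMe e = (q ^ (3 ^ e * k - k) * q ^ (3 ^ e * k - k))%N.
Proof.
rewrite -expnD; elim: e => [|e IH]; first by rewrite /MMe big_ord0 expn0 mul1n subnn.
rewrite /MMe big_ord_recr /= -/(MMe e) IH -expnD KdimSt; congr (_ ^ _)%N.
rewrite expnS; have : (k <= 3 ^ e * k)%N by rewrite leq_pmull // expn_gt0.
set x := (3 ^ e * k)%N; lia.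
Qed.

Lemma P_le e : (prodP q k e <= MMe e)%N.
Proof.
rewrite /prodP /MMe; apply: leq_prod => t _.
rewrite -[(4 * _)%N]/((1 + 3) * _)%N mulnDl mul1n expnD leq_mul2l leq_subr orbT //=.
Qed.

Lemma P_rat e : ((q ^ (3 * k))%:R * ((MMe e)%:R - (prodP q k e)%:R) <= e%:R * (MMe e)%:R :> rat).
Proof.
elim: e => [|e IH]; first by rewrite /MMe /prodP !big_ord0 subrr mulr0 mul0r.
have PM := P_le e.
rewrite /prodP /MMe !big_ord_recr /= -/(MMe e) -/(prodP q k e).
set P := prodP q k e in IH PM *; set M := MMe e in IH PM *.
set K := Kdim k e.+1.
have kK : (k <= K)%N by rewrite /K KdimSt leq_pmull // expn_gt0.
have y1 : (1 <= q ^ (3 * K))%N by rewrite expn_gt0 q0.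
rewrite !natrM natrB // -[(4 * K)%N]/((1 + 3) * K)%N mulnDl mul1n expnD natrM.
set T := (q ^ (3 * k))%:R; set x := (q ^ K)%:R; set y := (q ^ (3 * K))%:R.
have Ty : T <= y by rewrite ler_nat leq_exp2l // leq_mul2l kK orbT.
have x0 : 0 <= x by [].
have P0 : 0 <= P%:R :> rat by [].
have PM' : P%:R <= M%:R :> rat by rewrite ler_nat.
have T0 : 0 <= T by [].
have h1 : T * (P%:R * x) <= y * (M%:R * x) by apply: ler_pM => //; [apply: mulr_ge0 | apply: ler_wpM2r].
have h2 : x * y * (T * (M%:R - P%:R)) <= x * y * (e%:R * M%:R) by rewrite ler_wpM2l // mulr_ge0.
rewrite -natr1 -/P -/M.
nra.
Qed.

Lemma ratio_bound e : (0 < e)%N ->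
  0 < (Jq q (3 ^ e * k) k)%:R :> rat /\
  `|(prodP q k e)%:R / (Jq q (3 ^ e * k) k)%:R - 1| <= (e%:R + 6) / (q ^ (k - 1))%:R :> rat.
Proof.
move=> e0.
set n := (3 ^ e * k)%N.
have kn : (k <= n)%N by rewrite /n leq_pmull // expn_gt0.
set A := ((q ^ n - 1) %/ (q ^ k - 1))%N.
set B := ((q ^ (n - 1) - 1) %/ (q ^ (k - 1) - 1))%N.
have qk1 : (1 < q ^ k)%N by rewrite -{1}(expn0 q) ltn_exp2l //; lia.
have s2 : (q <= q ^ (k - 1))%N by rewrite -{1}(expn1 q) leq_exp2l //; lia.
have qk0 : (0 < q ^ k - 1)%N by rewrite subn_gt0.
have s0 : (0 < q ^ (k - 1) - 1)%N by rewrite subn_gt0; apply: leq_trans s2.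
have dv : (q ^ k - 1 %| q ^ n - 1)%N.
  have := @dvd_pow_sub1 (q ^ k) (3 ^ e) (ltnW qk1); rewrite -expnM mulnC.
  by rewrite subn1.
have HA : (A * (q ^ k - 1) = q ^ n - 1)%N by rewrite divnK.
have Jeq : Jq q n k = (A * B)%N.
  by rewrite /Jq -/B -HA mulnAC mulnK.
have e1 : (q ^ (n - k) * q ^ k = q ^ n)%N by rewrite -expnD subnK.
have e2 : (q ^ (n - k) * q ^ (k - 1) = q ^ (n - 1))%N by rewrite -expnD; congr (_ ^ _)%N; lia.
have e3 : (q ^ k = q * q ^ (k - 1))%N by rewrite -expnS; congr (_ ^ _)%N; lia.
have e4 : (q * q ^ (n - 1) = q ^ n)%N by rewrite -expnS; congr (_ ^ _)%N; lia.
have Nk0 : (0 < q ^ (n - k))%N by rewrite expn_gt0 q0.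
have NA : (q ^ (n - k) <= A)%N.
  rewrite -(leq_pmul2r qk0) HA mulnBr e1 muln1; apply: leq_sub2l; exact: Nk0.
have NB : (q ^ (n - k) <= B)%N.
  by rewrite leq_divRL // mulnBr e2 muln1; apply: leq_sub2l.
have HB : (q * (B * (q ^ (k - 1) - 1)) <= q ^ n - q)%N.
  rewrite -e4 -[X in (_ <= _ - X)%N]muln1 -mulnBr leq_mul2l; apply/orP; right.
  by rewrite leq_trunc_div.
have qn : (q <= q ^ n)%N by rewrite -{1}(expn1 q) leq_exp2l //; lia.
have core := @ratio_core q%:R (q ^ (k - 1))%:R (q ^ k)%:R (q ^ (3 * k))%:R (q ^ n)%:R
   (q ^ (n - k))%:R A%:R B%:R (MMe e)%:R (prodP q k e)%:R e%:R.
case: core.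
- by rewrite ler_nat.
- by rewrite ler_nat; apply: leq_trans s2.
- by rewrite -natrM e3.
- by rewrite ler_nat leq_exp2l //; lia.
- by rewrite -natrM e1.
- by rewrite ler1n.
- move: (congr1 (fun x => x%:R : rat) HA) => /=.
  by rewrite natrM !natrB ?expn_gt0 ?q0 // ?(ltnW qk1).
- move: HB; rewrite -(ler_nat rat) !natrM !natrB ?expn_gt0 ?q0 //; apply: leq_trans s2.
- by rewrite ler_nat.
- by rewrite ler_nat.
- by rewrite MMeE natrM.
- by [].
- by rewrite ler_nat P_le.
- exact: P_rat.
- by [].
- by rewrite Jeq natrM; move=> h1 h2; split.
Qed.

End Asym.


Lemma final_lt (e s : nat) (eps : rat) : 0 < eps -> (e%:R + 6) / eps < s%:R ->
  (e%:R + 6) / s%:R < eps.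
Proof.
move=> eps0 h.
have e60 : 0 < e%:R + 6 :> rat by apply: ltr_wpDl.
have s0 : 0 < s%:R :> rat by apply: lt_trans h; rewrite divr_gt0.
rewrite ltr_pdivrMr // mulrC -ltr_pdivrMr //.
Qed.

Theorem theorem4p6 :
  (* limit in k, q fixed *)
  (forall (q e : nat), prime_power q -> (2 <= e)%N ->
     forall eps : rat, 0 < eps ->
     exists K0 : nat, forall k : nat, (2 <= k)%N -> (K0 <= k)%N ->
       forall (L : finFieldType) (om gam : nat -> L),
         #|L| = (q ^ (3 ^ e * k))%N -> valid_choice q e k om gam ->
         `|code_ratio q e k om gam - 1| < eps)
  /\
  (* limit in q (over prime powers), k fixed *)
  (forall (e k : nat), (2 <= e)%N -> (2 <= k)%N ->
     forall eps : rat, 0 < eps ->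
     exists Q0 : nat, forall q : nat, prime_power q -> (Q0 <= q)%N ->
       forall (L : finFieldType) (om gam : nat -> L),
         #|L| = (q ^ (3 ^ e * k))%N -> valid_choice q e k om gam ->
         `|code_ratio q e k om gam - 1| < eps).
Proof.
have bnd : forall (e : nat) (eps : rat), 0 < eps ->
    exists N0 : nat, forall s : nat, (N0 <= s)%N -> (e%:R + 6) / s%:R < eps.
  move=> e eps eps0.
  have x0 : 0 <= (e%:R + 6) / eps :> rat.
    apply: divr_ge0; last exact: ltW.
    have := ler0n rat e; lra.
  exists (Num.bound ((e%:R + 6) / eps)) => s hs.
  apply: final_lt => //; apply: lt_le_trans (archi_boundP x0) _.
  by rewrite ler_nat.
split.
- move=> q e [p [r [pp [r0 qE]]]] e2 eps eps0.
  have [N0 HN] := bnd e eps eps0.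
  exists N0 => k k2 kN L om gam cardL vc.
  have q2 := q_gt1 pp r0 qE.
  have e1 : (1 <= e)%N by apply: leq_trans e2.
  rewrite /code_ratio (card_code pp r0 qE k2 e1 cardL vc).
  have [_ hb] := ratio_bound q2 k2 e1.
  apply: le_lt_trans hb _; apply: HN.
  apply: leq_trans kN _.
  have := ltn_expl (k - 1) q2; lia.
- move=> e k e2 k2 eps eps0.
  have [N0 HN] := bnd e eps eps0.
  exists N0 => q [p [r [pp [r0 qE]]]] qN L om gam cardL vc.
  have q2 := q_gt1 pp r0 qE.
  have e1 : (1 <= e)%N by apply: leq_trans e2.
  rewrite /code_ratio (card_code pp r0 qE k2 e1 cardL vc).
  have [_ hb] := ratio_bound q2 k2 e1.
  apply: le_lt_trans hb _; apply: HN.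
  apply: leq_trans qN _.
  by rewrite -{1}(expn1 q) leq_exp2l //; lia.
Qed.
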